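(* Let $F$ be a finite non-abelian group and let $L=F\wr\mathbb{Z}=\left(\bigoplus_{i\in\mathbb{Z}}F\right)\rtimes\mathbb{Z}$, where $\mathbb{Z}$ acts by shifting coordinates. Then $L$ does not embed (as a subgroup) in $\mathrm{IET}$.
   Context: $\mathrm{IET}$ denotes the group of interval exchange transformations of $[0,1)$: bijections of $[0,1)$ that are orientation-preserving piecewise isometries (piecewise translations), left-continuous, with finitely many discontinuity points. *)

(* Defs.v *)
From mathcomp Require Import all_boot fingroup.
From Stdlib Require Import Reals ZArith.

Set Implicit Arguments.
Unset Strict Implicit.
Unset Printing Implicit Defensive.

Open Scope R_scope.

Definition is_IET (f : R -> R) : Prop :=
  (forall x, 0 <= x < 1 -> 0 <= f x < 1) /\
  (forall x y, 0 <= x < 1 -> 0 <= y < 1 -> f x = f y -> x = y) /\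
  (forall y, 0 <= y < 1 -> exists x, 0 <= x < 1 /\ f x = y) /\
  exists (n : nat) (a t : nat -> R),
    a 0%nat = 0 /\ a n = 1 /\
    (forall i, (i < n)%nat -> a i < a (S i)) /\
    (forall i x, (i < n)%nat -> a i < x <= a (S i) -> x < 1 -> f x = x + t i).

(** Elements of the wreath product F wr Z = (⊕_{i∈Z} F) ⋊ Z are pairs (f, m)
    with f : Z -> F finitely supported and m : Z. *)
Definition finsupp (gT : finGroupType) (f : Z -> gT) : Prop :=
  exists N : Z, forall i : Z, (N < Z.abs i)%Z -> f i = 1%g.

(** Z acts by shifting coordinates: (m . g) i = g (i - m).  Product:
    (f, m) * (g, n) = (f * (m . g), m + n). *)
Definition wr_mul_fun (gT : finGroupType) (f : Z -> gT) (m : Z) (g : Z -> gT)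
  : Z -> gT := fun i => (f i * g (i - m)%Z)%g.

Definition wreath_Z_embeds_in_IET (gT : finGroupType) : Prop :=
  exists phi : (Z -> gT) -> Z -> R -> R,
    (forall f m, finsupp f -> is_IET (phi f m)) /\
    (forall f m g n, finsupp f -> finsupp g ->
       forall x, 0 <= x < 1 ->
         phi (wr_mul_fun f m g) (m + n)%Z x = phi f m (phi g n x)) /\
    (forall f m g n, finsupp f -> finsupp g ->
       (forall x, 0 <= x < 1 -> phi f m x = phi g n x) ->
       (forall i, f i = g i) /\ m = n).

(* Main.v *)
Require Import Defs.
From Stdlib Require Import Reals ZArith Lra Lia FunctionalExtensionality List Classical IndefiniteDescription.
From mathcomp Require Import all_boot fingroup zify.
Open Scope R_scope.


Definition Rltb (x y : R) : bool := if Rlt_dec x y then true else false.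
Definition Rleb (x y : R) : bool := if Rle_dec x y then true else false.

Lemma RltbP x y : Rltb x y = true <-> x < y.
Proof. unfold Rltb; destruct (Rlt_dec x y); split; try easy. Qed.
Lemma RlebP x y : Rleb x y = true <-> x <= y.
Proof. unfold Rleb; destruct (Rle_dec x y); split; try easy. Qed.

Lemma count_int (A B : R) (n : nat) : -1 <= A ->
  INR (\sum_(i < n) (Rltb A (INR i) && Rleb (INR i) B)) >= Rmin (INR n) B - A - 1.
Proof.
move=> HA; elim: n => [|n IH].
  rewrite big_ord0. simpl. unfold Rmin; destruct (Rle_dec 0 B); lra.
rewrite S_INR big_ord_recr /= plus_INR.
move: IH; set s := \sum_(i < n) _ => IH.
have H0 := pos_INR n. have H1 := pos_INR s.
unfold Rltb, Rleb in *.
destruct (Rlt_dec A (INR n)); destruct (Rle_dec (INR n) B);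
 move: IH; unfold Rmin; destruct (Rle_dec (INR n) B); destruct (Rle_dec (INR n + 1) B); simpl; lra.
Qed.

Lemma sum_excl (n : nat) (Q : nat -> bool) (P : bool) :
  (forall j, (j < n)%N -> Q j -> P) ->
  (forall j j', (j < n)%N -> (j' < n)%N -> Q j -> Q j' -> j = j') ->
  (\sum_(j < n) Q j <= P)%N.
Proof.
elim: n => [|n IH] HP Hex; first by rewrite big_ord0.
rewrite big_ord_recr /=.
case En: (Q n).
  have -> : P by apply: (HP n).
  rewrite big1 //= => j _.
  case Ej: (Q j) => //.
  have := Hex j n (ltn_trans (ltn_ord j) (ltnSn n)) (ltnSn n) Ej En.
  move=> E; have := ltn_ord j; rewrite E ltnn //.
rewrite addn0; apply: IH.
  by move=> j Hj; apply: HP; apply: ltn_trans Hj _.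
by move=> j j' Hj Hj'; apply: Hex; apply: ltn_trans (ltnSn n).
Qed.

Lemma a_mono (n : nat) (a : nat -> R) :
  (forall i, (i < n)%N -> a i < a (S i)) ->
  forall j d, (j + d <= n)%N -> a j <= a (j + d)%N.
Proof.
move=> Ha j; elim=> [|d IH] H; first by rewrite addn0; lra.
have := IH ltac:(lia).
have := Ha (j + d)%N ltac:(lia).
rewrite addnS; lra.
Qed.

Definition clamp (p q x : R) := Rmin (Rmax x p) q.

Lemma clamp_in p q u v y : p < q -> u <= v ->
  clamp p q u < y <= clamp p q v -> u < y <= v /\ p < y <= q.
Proof.
unfold clamp, Rmin, Rmax => H1 H2.
repeat (destruct Rle_dec); lra.
Qed.

Lemma clamp_mono p q u v : p < q -> u <= v -> clamp p q u <= clamp p q v.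
Proof. unfold clamp, Rmin, Rmax => H1 H2. repeat (destruct Rle_dec); lra. Qed.

Lemma divM_lt (M u z : R) : 0 < M -> (M * u < z <-> u < z / M).
Proof.
move=> HM; split => H.
- apply (Rmult_lt_reg_l M); first lra. replace (M * (z / M)) with z by (field; lra). lra.
- apply (Rmult_lt_compat_l M) in H; last lra. move: H. replace (M * (z / M)) with z by (field; lra). lra.
Qed.
Lemma divM_le (M v z : R) : 0 < M -> (z <= M * v <-> z / M <= v).
Proof.
move=> HM; split => H.
- apply (Rmult_le_reg_l M); first lra. replace (M * (z / M)) with z by (field; lra). lra.
- apply (Rmult_le_compat_l M) in H; last lra. move: H. replace (M * (z / M)) with z by (field; lra). lra.
Qed.

Lemma grid (g : R -> R) (Hg : is_IET g) (p q : R) : 0 <= p -> p < q -> q < 1 ->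
  exists n : nat, forall (M : nat) (P : nat -> bool), (0 < M)%N ->
   (forall i, (i < M)%N -> (exists y, p < y <= q /\ g y = INR i / INR M) -> P i = true) ->
   INR (\sum_(i < M) P i) >= INR M * (q - p) - INR n.
Proof.
move=> Hp Hpq Hq.
case: Hg => Hrange [Hinj [_ [n [a [t [Ha0 [Han [Hainc Hpiece]]]]]]]].
exists n => M P HM HP.
have HMr : 0 < INR M by apply: lt_0_INR; apply/ltP.
set h := clamp p q.
pose Q j i := Rltb (h (a j) + t j) (INR i / INR M) && Rleb (INR i / INR M) (h (a (S j)) + t j).
have amono : forall j j', (j <= j' <= n)%N -> a j <= a j'.
  move=> j j' /andP [H1 H2]. have := @a_mono n a Hainc j (j' - j)%N.
  rewrite subnKC //; apply; done.
have Qmem : forall j i, (j < n)%N -> Q j i ->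
   let y := INR i / INR M - t j in (a j < y <= a (S j) /\ p < y <= q) /\ g y = INR i / INR M.
  move=> j i Hj /andP [/RltbP H1 /RlebP H2] y.
  have Hjj : a j <= a (S j) by have := Hainc j Hj; lra.
  have [H3 H4] : a j < y <= a (S j) /\ p < y <= q.
    apply: clamp_in => //; rewrite /y; fold h; lra.
  split; first by split.
  rewrite (Hpiece j y Hj H3); last lra.
  rewrite /y; lra.
have HPQ : forall i, (i < M)%N -> (\sum_(j < n) Q j i <= P i)%N.
  move=> i Hi; apply: (@sum_excl n (fun j => Q j i) (P i)).
    move=> j Hj HQ; apply: HP => //.
    have [[_ Hy] Hg'] := Qmem j i Hj HQ. by exists (INR i / INR M - t j).
  move=> j j' Hj Hj' HQ HQ'.
  have [[Hy1 Hy2] Hg1] := Qmem j i Hj HQ.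
  have [[Hy1' Hy2'] Hg2] := Qmem j' i Hj' HQ'.
  have Hyy : INR i / INR M - t j = INR i / INR M - t j'.
    apply: Hinj; [lra|lra|]. simpl in Hg1, Hg2. rewrite Hg1 Hg2 //.
  case: (ltngtP j j') => // Hlt; exfalso.
  - have := amono (S j) j' ltac:(by rewrite Hlt /= ltnW). lra.
  - have := amono (S j') j ltac:(by rewrite Hlt /= ltnW). lra.
have Hpiece_count : forall j, (j < n)%N ->
    INR (\sum_(i < M) Q j i) >= INR M * (h (a (S j)) - h (a j)) - 1.
  move=> j Hj.
  have Hjj : a j <= a (S j) by have := Hainc j Hj; lra.
  have [Hempty|Hne] : h (a (S j)) <= h (a j) \/ h (a j) < h (a (S j)) by lra.
    have := pos_INR (\sum_(i < M) Q j i).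
    have : INR M * (h (a (S j)) - h (a j)) <= 0.
      have : 0 <= INR M * (h (a j) - h (a (S j))) by apply: Rmult_le_pos; lra.
      lra.
    lra.
  have Hu : 0 <= h (a j) + t j.
    apply: Rnot_lt_le => Hneg.
    pose e := Rmin (h (a (S j)) - h (a j)) (- (h (a j) + t j) / 2).
    have He1 : 0 < e by unfold e, Rmin; destruct Rle_dec; lra.
    have He2 : e <= h (a (S j)) - h (a j) by unfold e; apply: Rmin_l.
    have He3 : e <= - (h (a j) + t j) / 2 by unfold e; apply: Rmin_r.
    have [[Hy1 Hy2] [Hy3 Hy4]] := @clamp_in p q (a j) (a (S j)) (h (a j) + e) Hpq Hjj (ltac:(fold h; lra)).
    have := Hrange (h (a j) + e) ltac:(lra).
    rewrite (Hpiece j (h (a j) + e) Hj); lra.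
  have Hv : h (a (S j)) + t j < 1.
    have [[Hy1 Hy2] [Hy3 Hy4]] := @clamp_in p q (a j) (a (S j)) (h (a (S j))) Hpq Hjj (ltac:(fold h; lra)).
    have := Hrange (h (a (S j))) ltac:(lra).
    rewrite (Hpiece j (h (a (S j))) Hj); lra.
  have E : \sum_(i < M) Q j i = \sum_(i < M) (Rltb (INR M * (h (a j) + t j)) (INR i) &&
                 Rleb (INR i) (INR M * (h (a (S j)) + t j))).
    apply: eq_bigr => i _; rewrite /Q.
    have E1 : Rltb (h (a j) + t j) (INR i / INR M) = Rltb (INR M * (h (a j) + t j)) (INR i).
      apply/idP/idP => /RltbP H; apply/RltbP; by apply/divM_lt.
    have E2 : Rleb (INR i / INR M) (h (a (S j)) + t j) = Rleb (INR i) (INR M * (h (a (S j)) + t j)).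
      apply/idP/idP => /RlebP H; apply/RlebP; by apply/divM_le.
    by rewrite E1 E2.
  rewrite E.
  have := count_int (INR M * (h (a j) + t j)) (INR M * (h (a (S j)) + t j)) M
          ltac:(have := Rmult_le_pos _ _ (Rlt_le _ _ HMr) Hu; lra).
  have -> : Rmin (INR M) (INR M * (h (a (S j)) + t j)) = INR M * (h (a (S j)) + t j).
    apply: Rmin_right. have := Rmult_lt_compat_l _ _ _ HMr Hv. lra.
  lra.
have Htel : forall m, (m <= n)%N ->
   INR (\sum_(i < M) \sum_(j < m) Q j i) >= INR M * (h (a m) - h (a 0%N)) - INR m.
  elim=> [|m IH] Hm.
    rewrite big1; last by move=> i _; rewrite big_ord0.
    simpl; lra.
  have -> : \sum_(i < M) \sum_(j < m.+1) Q j i = (\sum_(i < M) \sum_(j < m) Q j i + \sum_(i < M) Q m i)%N.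
    rewrite -big_split /=; apply: eq_bigr => i _; by rewrite big_ord_recr.
  rewrite plus_INR S_INR.
  have := IH (ltnW Hm). have := Hpiece_count m Hm. lra.
have H1 := Htel n (leqnn n).
have H2 : (\sum_(i < M) \sum_(j < n) Q j i <= \sum_(i < M) P i)%N.
  by apply: leq_sum => i _; apply: HPQ.
have H3 := le_INR _ _ (elimT leP H2).
have Hh0 : h (a 0%N) = p by rewrite Ha0 /h /clamp /Rmin /Rmax; repeat destruct Rle_dec; lra.
have Hhn : h (a n) = q by rewrite Han /h /clamp /Rmin /Rmax; repeat destruct Rle_dec; lra.
rewrite Hh0 Hhn in H1. lra.
Qed.

Lemma expn_mono m n e : (m <= n)%N -> (m ^ e <= n ^ e)%N.
Proof. move=> H; elim: e => // e IH; rewrite !expnS; exact: leq_mul. Qed.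

Lemma arith C r : exists M, (0 < M)%N /\ ((C * M).+1 ^ r < 2 ^ M)%N.
Proof.
set t := (C + 2 * r + 1)%N.
exists (2 ^ (2 * t))%N; split; first by rewrite expn_gt0.
set s := (2 * t)%N. set M := (2 ^ s)%N.
have HM : (0 < M)%N by rewrite expn_gt0.
have H1 : ((C * M).+1 ^ r <= ((C + 1) * M) ^ r)%N by apply: expn_mono; nia.
have H2 : (((C + 1) * M) ^ r = (C+1)^r * 2 ^ (s * r))%N by rewrite expnMn -expnM.
have H3 : ((C + 1) ^ r <= 2 ^ (C * r))%N.
  rewrite expnM; apply: expn_mono; rewrite addn1; by apply: ltn_expl.
have H4 : ((C + 1) ^ r * 2 ^ (s * r) <= 2 ^ ((C + s) * r))%N.
  rewrite mulnDl expnD; exact: (leq_mul H3 (leqnn _)).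
have Ht : (t.+1 <= 2 ^ t)%N by apply: ltn_expl.
have H5 : (t.+1 * t.+1 <= M)%N.
  rewrite /M /s mulnC expnM -mulnn. exact: (leq_mul Ht Ht).
have H6 : ((C + s) * r < M)%N by rewrite /s /t in H5 *; nia.
apply: leq_ltn_trans H1 _. rewrite H2. apply: leq_ltn_trans H4 _.
by rewrite ltn_exp2l.
Qed.

Lemma grid_family (G : nat -> R -> R) (HG : forall k, is_IET (G k)) (p q : R) :
  0 <= p -> p < q -> q < 1 -> forall N, exists B : nat, forall k, (k < N)%N ->
  forall (M : nat) (P : nat -> bool), (0 < M)%N ->
   (forall i, (i < M)%N -> (exists y, p < y <= q /\ G k y = INR i / INR M) -> P i = true) ->
   INR (\sum_(i < M) P i) >= INR M * (q - p) - INR B.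
Proof.
move=> Hp Hpq Hq; elim=> [|N [B IH]]; first by exists 0%N.
have [n Hn] := @grid (G N) (HG N) p q Hp Hpq Hq.
exists (maxn B n) => k Hk M P HM HP.
have HB : INR B <= INR (maxn B n) by apply: le_INR; apply/leP; apply: leq_maxl.
have Hn' : INR n <= INR (maxn B n) by apply: le_INR; apply/leP; apply: leq_maxr.
case: (ltngtP k N) => Hk'.
- have := IH k Hk' M P HM HP; lra.
- by rewrite ltnS leqNgt Hk' in Hk.
- subst k; have := Hn M P HM HP; lra.
Qed.

Lemma pigeon (M c : nat) (X : 'I_M -> nat) : (0 < M)%N -> (0 < c)%N ->
  (M * c <= \sum_(i < M) X i)%N -> exists i, (c <= X i)%N.
Proof.
move=> HM Hc Hs.
case: (pickP (fun i => c <= X i)%N) => [i Hi|H]; first by exists i.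
have : (\sum_(i < M) X i <= \sum_(i < M) c.-1)%N.
  apply: leq_sum => i _; have := H i; rewrite /= => /negbT; rewrite -ltnNge; lia.
rewrite sum_nat_const card_ord. nia.
Qed.

Fixpoint rsum (n : nat) (F : nat -> R) : R :=
  match n with O => 0 | S n => rsum n F + F n end.
Fixpoint nsum (n : nat) (F : nat -> nat) : nat :=
  match n with O => 0%N | S n => (nsum n F + F n)%N end.

Definition Sums (TT : list R) (L : nat) (y : R) :=
  exists v : nat -> nat, (nsum (length TT) v <= L)%N /\
    y = rsum (length TT) (fun j => INR (v j) * List.nth j TT 0).

Lemma rsumS n F : rsum (S n) F = rsum n F + F n.
Proof. by []. Qed.
Lemma rsum_add n F G : rsum n (fun j => F j + G j) = rsum n F + rsum n G.
Proof. elim: n => /= [|n ->]; ring. Qed.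
Lemma rsum_ext n F G : (forall j, F j = G j) -> rsum n F = rsum n G.
Proof. move=> H; elim: n => //= n ->; by rewrite H. Qed.
Lemma nsum_add n F G : nsum n (fun j => F j + G j)%N = (nsum n F + nsum n G)%N.
Proof. elim: n => //= n ->; lia. Qed.

Lemma Sums_add TT L1 L2 y1 y2 : Sums TT L1 y1 -> Sums TT L2 y2 -> Sums TT (L1 + L2) (y1 + y2).
Proof.
case=> v1 [H1 E1] [v2 [H2 E2]].
exists (fun j => v1 j + v2 j)%N; split.
  rewrite nsum_add; lia.
rewrite E1 E2 -rsum_add; apply: rsum_ext => j; rewrite plus_INR; ring.
Qed.

Lemma Sums_0 TT : Sums TT 0 0.
Proof.
exists (fun _ => 0%N); split.
  have -> // : forall n, nsum n (fun _ => 0%N) = 0%N by elim => //= n ->.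
have -> // : forall n, rsum n (fun j => INR 0 * List.nth j TT 0) = 0.
elim => //= n ->; simpl; ring.
Qed.

Lemma Sums_mono TT L L' y : (L <= L')%N -> Sums TT L y -> Sums TT L' y.
Proof. move=> H [v [H1 E]]; exists v; split => //; apply: leq_trans H1 H. Qed.

Lemma Sums_in TT y : List.In y TT -> Sums TT 1 y.
Proof.
move=> Hy; have [j [Hj Ej]] := List.In_nth TT y 0 Hy.
exists (fun i => if i == j then 1%N else 0%N); split.
  have : forall n, nsum n (fun i => if i == j then 1%N else 0%N) = (j < n)%N.
    elim=> //= n ->. case: (ltngtP j n) => H.
    - rewrite (_ : (j < n.+1)%N = true) //; lia.
    - rewrite (_ : (j < n.+1)%N = false) //; lia.
    - subst; rewrite ltnSn //.
  move=> ->; case: (j < _)%N => //.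
have : forall n, rsum n (fun i => INR (if i == j then 1%N else 0%N) * List.nth i TT 0)
        = if (j < n)%N then y else 0.
  elim=> [//|n IH]. rewrite rsumS IH. case: (ltngtP j n) => H.
  - rewrite (_ : (j < n.+1)%N = true); [simpl; ring|lia].
  - rewrite (_ : (j < n.+1)%N = false); [simpl; ring|lia].
  - subst; rewrite ltnSn; simpl; ring.
move=> ->. by rewrite (_ : (j < length TT)%N = true) //; apply/ltP.
Qed.


Lemma nsum_ge n F j : (j < n)%N -> (F j <= nsum n F)%N.
Proof.
elim: n => // n IH Hj /=. case: (ltngtP j n) => H.
- have := IH H; lia.
- lia.
- subst; lia.
Qed.

Lemma count_sets (N : nat) (K : {set 'I_N.+1}) (L : nat) (TT : list R) (x : R)
  (point : {set 'I_N.+1} -> R) :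
  (forall S, Sums TT L (point S - x)) ->
  {in powerset K &, injective point} ->
  (2 ^ #|K| <= L.+1 ^ (length TT))%N.
Proof.
move=> HS Hinj.
pose v S := proj1_sig (constructive_indefinite_description _ (HS S)).
have Hv S : (nsum (length TT) (v S) <= L)%N /\
    point S - x = rsum (length TT) (fun j => INR (v S j) * List.nth j TT 0).
  exact: (proj2_sig (constructive_indefinite_description _ (HS S))).
pose w S : {ffun 'I_(length TT) -> 'I_L.+1} := [ffun j : 'I_(length TT) => inord (v S (nat_of_ord j))].
rewrite -card_powerset.
have -> : (L.+1 ^ length TT)%N = #|{ffun 'I_(length TT) -> 'I_L.+1}|.
  by rewrite card_ffun !card_ord.
apply: (@leq_card_in _ _ w) => S1 S2 HS1 HS2 Ew.
apply: Hinj => //.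
have E : forall j, (j < length TT)%N -> v S1 j = v S2 j.
  move=> j Hj.
  have := congr1 (fun f : {ffun 'I_(length TT) -> 'I_L.+1} => nat_of_ord (f (Ordinal Hj))) Ew; rewrite /w !ffunE /=.
  rewrite !inordK //.
  - have := nsum_ge (length TT) (v S2) j Hj; have := proj1 (Hv S2); lia.
  - have := nsum_ge (length TT) (v S1) j Hj; have := proj1 (Hv S1); lia.
have E2 : rsum (length TT) (fun j => INR (v S1 j) * List.nth j TT 0)
        = rsum (length TT) (fun j => INR (v S2 j) * List.nth j TT 0).
  have : forall n, (n <= length TT)%N -> rsum n (fun j => INR (v S1 j) * List.nth j TT 0)
        = rsum n (fun j => INR (v S2 j) * List.nth j TT 0).
    elim=> // n IH Hn /=. rewrite IH ?E //; lia.
  by apply.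
have := proj2 (Hv S1); have := proj2 (Hv S2); lra.
Qed.



Lemma ex_pbool (P : Prop) : exists b : bool, b = true <-> P.
Proof. case: (classic P) => H; [exists true | exists false]; split => //. Qed.
Definition pbool (P : Prop) : bool :=
  proj1_sig (constructive_indefinite_description _ (ex_pbool P)).
Lemma pboolP (P : Prop) : pbool P = true <-> P.
Proof. exact: (proj2_sig (constructive_indefinite_description _ (ex_pbool P))). Qed.

Section Emb.
Variable gT : finGroupType.
Variable phi : (Z -> gT) -> Z -> R -> R.
Hypothesis Hiet : forall f m, finsupp f -> is_IET (phi f m).
Hypothesis Hhom : forall f m g n, finsupp f -> finsupp g ->
       forall x, 0 <= x < 1 ->
         phi (wr_mul_fun f m g) (m + n)%Z x = phi f m (phi g n x).

Definition one : Z -> gT := fun _ => 1%g.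
Definition lamp (k : Z) (c : gT) : Z -> gT := fun i => if Z.eqb i k then c else 1%g.
Definition pmul (f g : Z -> gT) : Z -> gT := fun i => (f i * g i)%g.
Definition pinv (f : Z -> gT) : Z -> gT := fun i => ((f i)^-1)%g.

Lemma fs_one : finsupp one.
Proof. by exists 0%Z. Qed.
Lemma fs_lamp k c : finsupp (lamp k c).
Proof. exists (Z.abs k) => i Hi; rewrite /lamp. case: (Z.eqb_spec i k) => // E; subst; lia. Qed.
Lemma fs_mul f g : finsupp f -> finsupp g -> finsupp (pmul f g).
Proof.
case=> N1 H1 [N2 H2]; exists (Z.max N1 N2) => i Hi; rewrite /pmul H1 ?H2 ?mulg1 //; lia.
Qed.
Lemma fs_inv f : finsupp f -> finsupp (pinv f).
Proof. case=> N1 H1; exists N1 => i Hi; by rewrite /pinv H1 ?invg1. Qed.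

Lemma rng f m x : finsupp f -> 0 <= x < 1 -> 0 <= phi f m x < 1.
Proof. move=> Hf Hx; by case: (Hiet f m Hf) => H _; apply: H. Qed.
Lemma injp f m x y : finsupp f -> 0 <= x < 1 -> 0 <= y < 1 -> phi f m x = phi f m y -> x = y.
Proof. move=> Hf Hx Hy; by case: (Hiet f m Hf) => _ [H _]; apply: H. Qed.

Lemma hom0 f g x : finsupp f -> finsupp g -> 0 <= x < 1 ->
  phi (pmul f g) 0 x = phi f 0%Z (phi g 0%Z x).
Proof.
move=> Hf Hg Hx; rewrite -(Hhom f 0 g 0 Hf Hg x Hx) /=.
congr phi; apply: functional_extensionality => i; rewrite /wr_mul_fun /pmul.
by rewrite Z.sub_0_r.
Qed.

Lemma phi_one x : 0 <= x < 1 -> phi one 0 x = x.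
Proof.
move=> Hx.
have E : pmul one one = one by apply: functional_extensionality => i; rewrite /pmul /one mulg1.
have := hom0 one one x fs_one fs_one Hx; rewrite E => H.
apply: (injp one 0 _ _ fs_one (rng one 0 x fs_one Hx) Hx); by rewrite -H.
Qed.

Lemma phi_ext f g m x : (forall i, f i = g i) -> phi f m x = phi g m x.
Proof. move=> H; have -> // : f = g by apply: functional_extensionality. Qed.

Lemma inv_fix u x : finsupp u -> 0 <= x < 1 -> phi u 0 x = x -> phi (pinv u) 0 x = x.
Proof.
move=> Hu Hx Hfx.
have H := hom0 u (pinv u) x Hu (fs_inv u Hu) Hx.
rewrite (@phi_ext _ one) in H; last by move=> i; rewrite /pmul /pinv mulgV.
rewrite phi_one // in H.
apply: (injp u 0 _ _ Hu (rng (pinv u) 0 x (fs_inv u Hu) Hx) Hx); by rewrite -H Hfx.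
Qed.

Lemma conj1 g x : finsupp g -> 0 <= x < 1 ->
  phi (fun i => g (i - 1)%Z) 0 x = phi one 1 (phi g 0 (phi one (-1) x)).
Proof.
move=> Hg Hx.
have Hsg : finsupp (fun i => g (i - 1)%Z).
  case: Hg => N H; exists (N + 1)%Z => i Hi; apply: H; lia.
have H1 := Hhom (fun i => g (i - 1)%Z) 1 one (-1) Hsg fs_one x Hx.
rewrite (@phi_ext (wr_mul_fun _ _ _) (fun i => g (i - 1)%Z)) in H1; last first.
  by move=> i; rewrite /wr_mul_fun /one mulg1.
rewrite /= in H1. rewrite H1.
have Hy := rng one (-1) x fs_one Hx.
have H2 := Hhom one 1 g 0 fs_one Hg _ Hy.
rewrite (@phi_ext (wr_mul_fun _ _ _) (fun i => g (i - 1)%Z)) in H2; last first.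
  by move=> i; rewrite /wr_mul_fun /one mul1g.
by rewrite /= in H2.
Qed.

Lemma conjk (k : nat) c y : 0 <= y < 1 ->
  phi (lamp (Z.of_nat k) c) 0 (phi one (Z.of_nat k) y) =
  phi one (Z.of_nat k) (phi (lamp 0 c) 0 y).
Proof.
move=> Hy.
have H1 := Hhom (lamp (Z.of_nat k) c) 0 one (Z.of_nat k) (fs_lamp (Z.of_nat k) c) fs_one y Hy.
have H2 := Hhom one (Z.of_nat k) (lamp 0 c) 0 fs_one (fs_lamp 0 c) y Hy.
rewrite -H1 -H2 Z.add_0_r Z.add_0_l.
apply: phi_ext => i; rewrite /wr_mul_fun /one /lamp mulg1 mul1g.
case: (Z.eqb_spec i (Z.of_nat k)); case: (Z.eqb_spec (i - Z.of_nat k) 0) => //; lia.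
Qed.


Lemma find_piece n (a : nat -> R) : a 0%N = 0 -> (forall i, (i < n)%N -> a i < a (S i)) ->
  forall x, 0 < x -> x <= a n -> exists i, (i < n)%N /\ a i < x <= a (S i).
Proof.
move=> Ha0; elim: n => [|n IH] Hinc x Hx Hxn.
  rewrite Ha0 in Hxn; lra.
case: (Rle_dec x (a n)) => H.
  have [i [Hi Hi2]] := IH (fun i Hi => Hinc i (ltn_trans Hi (ltnSn n))) x Hx H.
  exists i; split => //; apply: ltn_trans Hi (ltnSn n).
exists n; split => //; lra.
Qed.

Lemma disp_list g : is_IET g -> exists l : list R, forall x, 0 <= x < 1 -> List.In (g x - x) l.
Proof.
case=> Hr [Hi [_ [n [a [t [Ha0 [Han [Hinc Hp]]]]]]]].
exists ((g 0 - 0) :: List.map t (List.seq 0 n)) => x Hx.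
case: (Req_dec x 0) => [->|Hx0]; first by left.
right.
have [i [Hin Hai]] := @find_piece n a Ha0 Hinc x ltac:(lra) ltac:(lra).
rewrite (Hp i x Hin Hai).
2: lra.
have -> : x + t i - x = t i by ring.
  apply: List.in_map; apply/List.in_seq; move/ltP: Hin; lia.
Qed.

Lemma T_exists : exists T : list R,
  (forall c x, 0 <= x < 1 -> List.In (phi (lamp 0 c) 0 x - x) T) /\
  (forall x, 0 <= x < 1 -> List.In (phi one 1 x - x) T) /\
  (forall x, 0 <= x < 1 -> List.In (phi one (-1) x - x) T).
Proof.
have Hs : forall s : seq gT, exists l : list R,
    forall c, c \in s -> forall x, 0 <= x < 1 -> List.In (phi (lamp 0 c) 0 x - x) l.
  elim=> [|c0 s [l IH]]; first by exists nil.
  have [l0 H0] := disp_list _ (Hiet (lamp 0 c0) 0 (fs_lamp 0 c0)).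
  exists (l0 ++ l) => c; rewrite in_cons => /orP [/eqP ->|Hc] x Hx; apply List.in_or_app.
    by left; apply: H0.
  by right; apply: IH.
have [l1 H1] := Hs (enum gT).
have [l2 H2] := disp_list _ (Hiet one 1 fs_one).
have [l3 H3] := disp_list _ (Hiet one (-1) fs_one).
exists (l1 ++ l2 ++ l3); split; [|split] => [c|c|c] *; apply List.in_or_app.
- by left; apply: H1; rewrite ?mem_enum.
- by right; apply List.in_or_app; left; apply: H2.
- by right; apply List.in_or_app; right; apply: H3.
Qed.


Lemma upper (T : list R)
  (HT1 : forall c x, 0 <= x < 1 -> List.In (phi (lamp 0 c) 0 x - x) T)
  (HT2 : forall x, 0 <= x < 1 -> List.In (phi one 1 x - x) T)
  (HT3 : forall x, 0 <= x < 1 -> List.In (phi one (-1) x - x) T) :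
  forall n (f : Z -> gT), (forall i, (i < 0)%Z \/ (Z.of_nat n <= i)%Z -> f i = 1%g) ->
  forall x, 0 <= x < 1 -> Sums T (3 * n) (phi f 0 x - x).
Proof.
elim=> [|n IH] f Hf x Hx.
  rewrite (@phi_ext f one) ?phi_one //; last by move=> i; apply: Hf; lia.
  replace (x - x) with 0 by ring; apply: Sums_0.
set rest := fun i => if Z.eqb i 0 then 1%g else f i.
set f' := fun i => rest (i + 1)%Z.
have Hfs : finsupp f by exists (Z.of_nat n.+1) => i Hi; apply: Hf; lia.
have Hrs : finsupp rest.
  case: Hfs => N HN; exists N => i Hi; rewrite /rest; case: (Z.eqb i 0) => //; by apply: HN.
have Hf' : forall i, (i < 0)%Z \/ (Z.of_nat n <= i)%Z -> f' i = 1%g.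
  move=> i Hi; rewrite /f' /rest; case: (Z.eqb_spec (i + 1) 0) => // E; apply: Hf; lia.
have Hf's : finsupp f' by exists (Z.of_nat n) => i Hi; apply: Hf'; lia.
have E1 : phi f 0 x = phi (lamp 0 (f 0%Z)) 0 (phi rest 0 x).
  rewrite -hom0 //; [|apply: fs_lamp].
  apply: phi_ext => i; rewrite /pmul /lamp /rest.
  case: (Z.eqb_spec i 0) => [->|_]; by rewrite ?mulg1 ?mul1g.
have E2 : forall z, 0 <= z < 1 -> phi rest 0 z = phi one 1 (phi f' 0 (phi one (-1) z)).
  move=> z Hz; rewrite -conj1 //.
  apply: phi_ext => i; rewrite /f'; by rewrite Z.sub_add.
rewrite E1 E2 //.
set x1 := phi one (-1) x.
have Hx1 : 0 <= x1 < 1 by apply: rng => //; apply: fs_one.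
set x2 := phi f' 0 x1.
have Hx2 : 0 <= x2 < 1 by apply: rng.
set x3 := phi one 1 x2.
have Hx3 : 0 <= x3 < 1 by apply: rng => //; apply: fs_one.
have -> : phi (lamp 0 (f 0%Z)) 0 x3 - x = (phi (lamp 0 (f 0%Z)) 0 x3 - x3) + ((x3 - x2) + ((x2 - x1) + (x1 - x))) by ring.
have -> : (3 * n.+1 = 1 + (1 + (3 * n + 1)))%N by lia.
apply: Sums_add; first by apply: Sums_in; apply: HT1.
apply: Sums_add; first by apply: Sums_in; apply: HT2.
apply: Sums_add; first by apply: IH.
by apply: Sums_in; apply: HT3.
Qed.


Definition fS (N : nat) (c : gT) (S : {set 'I_N.+1}) : Z -> gT :=
  fun i => if [exists k in S, Z.eqb (Z.of_nat k) i] then c else 1%g.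
Arguments fS {N}.

Definition Fcond (x : R) (rho : Z -> Z) (c : gT) (k : Z) :=
  ~ (exists w, finsupp w /\ (forall i, (rho i < rho k)%Z -> w i = 1%g) /\ w k = c /\ phi w 0 x = x).

Lemma fS_out N c (S : {set 'I_N.+1}) i : (forall k : 'I_N.+1, k \in S -> Z.of_nat k <> i) -> fS c S i = 1%g.
Proof.
move=> H; rewrite /fS; case: existsP => // [[k /andP [Hk /Z.eqb_spec E]]].
by case: (H k Hk).
Qed.

Lemma fS_in N c (S : {set 'I_N.+1}) (k : 'I_N.+1) : k \in S -> fS c S (Z.of_nat k) = c.
Proof.
move=> Hk; rewrite /fS; case: existsP => // [[]]; exists k; rewrite Hk /=; apply/Z.eqb_spec; done.
Qed.

Lemma fS_notin N c (S : {set 'I_N.+1}) (k : 'I_N.+1) : k \notin S -> fS c S (Z.of_nat k) = 1%g.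
Proof.
move=> Hk; apply: fS_out => k' Hk' E.
have E' : k' = k by apply: val_inj; move: E; rewrite /=; lia.
by move: Hk; rewrite -E' Hk'.
Qed.

Lemma fS_supp N c (S : {set 'I_N.+1}) i : ((i < 0)%Z \/ (Z.of_nat N.+1 <= i)%Z) -> fS c S i = 1%g.
Proof.
move=> Hi; apply: fS_out => k _ E. have := ltn_ord k. move=> /ltP. lia.
Qed.

Lemma fS_fs N c (S : {set 'I_N.+1}) : finsupp (@fS N c S).
Proof. exists (Z.of_nat N.+1) => i Hi; apply: fS_supp; lia. Qed.

Lemma fS_diff N c (S T : {set 'I_N.+1}) i : fS c S i <> fS c T i ->
  exists k : 'I_N.+1, Z.of_nat k = i /\ k \in ((S :\: T) :|: (T :\: S)).
Proof.
move=> H.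
case: (boolP [exists k in S, Z.eqb (Z.of_nat k) i]) => HS;
case: (boolP [exists k in T, Z.eqb (Z.of_nat k) i]) => HT.
- by move: H; rewrite /fS HS HT.
- case/existsP: HS => k /andP [Hk /Z.eqb_spec E]; exists k; split => //.
  have HkT : k \notin T.
    apply/negP => HkT. move/negP: HT; apply.
    apply/existsP; exists k; rewrite HkT /=; by apply/Z.eqb_spec.
  by rewrite !inE Hk HkT.
- case/existsP: HT => k /andP [Hk /Z.eqb_spec E]; exists k; split => //.
  have HkS : k \notin S.
    apply/negP => HkS. move/negP: HS; apply.
    apply/existsP; exists k; rewrite HkS /=; by apply/Z.eqb_spec.
  by rewrite !inE Hk HkS orbT.
- by move: H; rewrite /fS (negbTE HS) (negbTE HT).
Qed.

Lemma inj_sets N (x : R) (Hx : 0 <= x < 1) (c : gT) (rho : Z -> Z) (mu : 'I_N.+1 -> nat)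
  (Hmono : forall k k' : 'I_N.+1, (mu k <= mu k')%N -> (rho (Z.of_nat k) <= rho (Z.of_nat k'))%Z)
  (K : {set 'I_N.+1}) (HK : forall k, k \in K -> Fcond x rho c (Z.of_nat k))
  (S T : {set 'I_N.+1}) : S \subset K -> T \subset K ->
  phi (fS c S) 0 x = phi (fS c T) 0 x -> S = T.
Proof.
move=> HSK HTK Heq.
set D := (S :\: T) :|: (T :\: S).
case: (pickP (mem D)) => [k1 Hk1|HD]; last first.
  apply/setP => k. move: (HD k); rewrite /= /D !inE.
  by case: (k \in S); case: (k \in T).
case: (arg_minnP mu Hk1) => k0 Hk0 Hmin.
have Hk0K : k0 \in K.
  move: Hk0; rewrite /D !inE => /orP [/andP [_ H]|/andP [_ H]].
  - by apply: (subsetP HSK).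
  - by apply: (subsetP HTK).
exfalso; apply: (HK k0 Hk0K).
set u := fun i => ((fS c T i)^-1 * fS c S i)%g.
have Hu : finsupp u by apply: (fs_mul _ _ (fs_inv _ (fS_fs _ c T)) (fS_fs _ c S)).
have Hux : phi u 0 x = x.
  have Hux1 := rng u 0 x Hu Hx.
  apply: (injp (fS c T) 0 _ _ (fS_fs _ c T) Hux1 Hx).
  rewrite -hom0 //; last by apply: fS_fs.
  rewrite -Heq; apply: phi_ext => i; by rewrite /pmul /u mulKVg.
have Hlow : forall i, (rho i < rho (Z.of_nat k0))%Z -> u i = 1%g.
  move=> i Hi. case: (eqVneq (fS c S i) (fS c T i)) => [E|/eqP NE].
    by rewrite /u E mulVg.
  have [k [Ek HkD]] := fS_diff _ _ _ _ _ NE.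
  have := Hmono k0 k (Hmin k HkD). rewrite Ek. lia.
move: Hk0; rewrite /D !inE => /orP [/andP [HnT HS]|/andP [HnS HT]].
- exists u; split => //; split => //; split => //.
  by rewrite /u (fS_in _ c S k0 HS) (fS_notin _ c T k0 HnT) invg1 mul1g.
- exists (pinv u); split; first by apply: fs_inv.
  split; first by move=> i Hi; rewrite /pinv Hlow // invg1.
  split; first by rewrite /pinv /u (fS_in _ c T k0 HT) (fS_notin _ c S k0 HnS) mulg1 invgK.
  by apply: inv_fix.
Qed.

Lemma comm_cond (a b : gT) (k : nat) (x : R) (Hx : 0 <= x < 1) :
  phi (lamp (Z.of_nat k) (a * (b * (a^-1 * b^-1))))%g 0 x <> x ->
  Fcond x id a (Z.of_nat k) \/ Fcond x Z.opp b (Z.of_nat k).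
Proof.
move=> Hmv.
case: (classic (Fcond x id a (Z.of_nat k))) => H1; first by left.
case: (classic (Fcond x Z.opp b (Z.of_nat k))) => H2; first by right.
exfalso; apply: Hmv.
move/NNPP: H1 => [w [Hw [Hw1 [Hw2 Hw3]]]].
move/NNPP: H2 => [v [Hv [Hv1 [Hv2 Hv3]]]].
have Hwi := inv_fix w x Hw Hx Hw3.
have Hvi := inv_fix v x Hv Hx Hv3.
rewrite (@phi_ext _ (pmul w (pmul v (pmul (pinv w) (pinv v))))); last first.
  move=> i; rewrite /pmul /pinv /lamp.
  case: (Z.eqb_spec i (Z.of_nat k)) => [->|NE]; first by rewrite Hw2 Hv2.
  case: (Z.lt_total i (Z.of_nat k)) => [Hlt|[E|Hgt]].
  - by rewrite Hw1 // invg1 !mul1g mulgV.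
  - by [].
  - rewrite Hv1 /=; last lia. by rewrite invg1 !mul1g mulg1 mulgV.
rewrite hom0 //; last by repeat apply: fs_mul; try apply: fs_inv.
rewrite hom0 //; last by repeat apply: fs_mul; try apply: fs_inv.
rewrite hom0 //; try by apply: fs_inv.
by rewrite Hvi Hwi Hv3 Hw3.
Qed.

Lemma main_false (Hinjw : forall f m g n, finsupp f -> finsupp g ->
       (forall x, 0 <= x < 1 -> phi f m x = phi g n x) -> (forall i, f i = g i) /\ m = n)
  (a b : gT) (Hab : (a * b)%g <> (b * a)%g) : False.
Proof.
set gam := (a * (b * (a^-1 * b^-1)))%g.
have Hgam : gam <> 1%g.
  move=> E; apply: Hab.
  have E2 : ((a * b)^-1 == a^-1 * b^-1)%g by rewrite eq_invg_mul -mulgA -/gam E.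
  by rewrite -[(a * b)%g]invgK (eqP E2) invMg !invgK.
have [y0 [Hy0 Hmv0]] : exists y0, 0 <= y0 < 1 /\ phi (lamp 0 gam) 0 y0 <> y0.
  apply: NNPP => Hn.
  have := Hinjw (lamp 0 gam) 0%Z one 0%Z (fs_lamp 0 gam) fs_one.
  case.
  - move=> x Hx; rewrite phi_one //; apply: NNPP => Hne; apply: Hn; by exists x.
  - move=> H _; have := H 0%Z; rewrite /lamp /one /=; exact: Hgam.
have [y1 [Hy1 Hmv1]] : exists y1, 0 < y1 < 1 /\ phi (lamp 0 gam) 0 y1 <> y1.
  case: (Req_dec y0 0) => [E|NE]; last by exists y0; split => //; lra.
  subst y0. set z := phi (lamp 0 gam) 0 0.
  have Hz := rng (lamp 0 gam) 0 0 (fs_lamp 0 gam) Hy0.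
  have Hz0 : 0 < z.
    case: (Rle_lt_or_eq_dec _ _ (proj1 Hz)) => // E; exfalso; apply: Hmv0; exact: (esym E).
  exists z; split; first (split; [exact: Hz0 | exact: (proj2 Hz)]).
  move=> Ez.
  have : z = 0 by apply: (injp (lamp 0 gam) 0 _ _ (fs_lamp 0 gam) Hz Hy0); rewrite Ez.
  lra.
have [p [q [Hp [Hpq [Hq Hmove]]]]] : exists p q, 0 <= p /\ p < q /\ q < 1 /\
   forall y, p < y <= q -> phi (lamp 0 gam) 0 y <> y.
  case: (Hiet (lamp 0 gam) 0 (fs_lamp 0 gam)) => _ [_ [_ [n [aa [t [Ha0 [Han [Hinc Hpc]]]]]]]].
  have [i [Hi Hai]] := @find_piece n aa Ha0 Hinc y1 ltac:(lra) ltac:(lra).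
  exists (aa i), y1; split.
    have := @a_mono n aa Hinc 0 i ltac:(lia). by rewrite add0n Ha0.
  split; first lra. split; first lra.
  move=> y Hy E.
  have E1 := Hpc i y Hi ltac:(lra) ltac:(lra).
  have E2 := Hpc i y1 Hi Hai ltac:(lra).
  apply: Hmv1. rewrite E2. rewrite E1 in E. lra.
have [T [HT1 [HT2 HT3]]] := T_exists.
set r := length T.
set l := q - p.
have Hl : 0 < l by rewrite /l; lra.
have [Q [HQ0 HQ]] : exists Q : nat, (0 < Q)%N /\ 4 <= INR Q * l.
  have [Q [HQ1 HQ2]] := archimed_cor1 (l / 4) ltac:(lra).
  exists Q; split; first by apply/ltP.
  have HQr : 0 < INR Q by apply: lt_0_INR.
  have H1 := Rmult_lt_compat_l (INR Q) _ _ HQr HQ1.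
  rewrite Rinv_r in H1; last lra.
  have : INR Q * (l / 4) = INR Q * l / 4 by field.
  lra.
have [M' [HM'0 HM']] := arith (3 * Q) r.
set N := (Q * M').-1.
have HN : N.+1 = (Q * M')%N by rewrite /N prednK // muln_gt0 HQ0 HM'0.
have [B HB] := @grid_family (fun k => phi one (Z.of_nat k)) (fun k => Hiet one (Z.of_nat k) fs_one)
                 p q Hp Hpq Hq N.+1.
set M := (Q * B.+1)%N.
have HM : (0 < M)%N by rewrite muln_gt0 HQ0.
have HMr : 0 < INR M by apply: lt_0_INR; apply/ltP.
have HMl : INR M * l - INR B >= INR M * l / 2.
  have : INR M * l = INR B.+1 * (INR Q * l) by rewrite /M mult_INR; ring.
  have := pos_INR B. rewrite S_INR. nra.
set mv := fun (k i : nat) =>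
  if Req_EM_T (phi (lamp (Z.of_nat k) gam) 0 (INR i / INR M)) (INR i / INR M) then false else true.
have Hk : forall k, (k < N.+1)%N -> INR (\sum_(i < M) mv k i) >= INR M * l / 2.
  move=> k Hk.
  suff : INR (\sum_(i < M) mv k i) >= INR M * (q - p) - INR B by rewrite -/l; lra.
  apply: (HB k Hk M (mv k) HM) => i Hi [y [Hy Ey]].
  rewrite /mv; case: Req_EM_T => // E; exfalso.
  have Hy' : 0 <= y < 1 by lra.
  rewrite -Ey conjk // in E.
  apply: (Hmove y Hy).
  apply: (injp one (Z.of_nat k) _ _ fs_one _ Hy' E).
  by apply: rng => //; apply: fs_lamp.
have Hsum : forall m, (m <= N.+1)%N ->
    INR (\sum_(k < m) \sum_(i < M) mv k i) >= INR m * (INR M * l / 2).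
  elim=> [|m IH] Hm; first by rewrite big_ord0 /=; lra.
  rewrite S_INR big_ord_recr plus_INR.
  have -> : \sum_(i < m) \sum_(i0 < M) mv (widen_ord (leqnSn m) i) i0 = \sum_(k < m) \sum_(i < M) mv k i by [].
  have := IH (ltnW Hm). have := Hk m Hm. change (nat_of_ord (@ord_max m)) with m. rewrite Rmult_plus_distr_r Rmult_1_l. lra.
have Htot : (M * (2 * M') <= \sum_(i < M) \sum_(k < N.+1) mv k i)%N.
  rewrite exchange_big /=.
  apply/leP; apply: INR_le.
  have := Hsum N.+1 (leqnn _).
  rewrite HN (mult_INR Q M') (mult_INR M (2 * M')) (mult_INR 2 M').
  have HM'r := pos_INR M'.
  have Hpos : 0 <= INR M' * INR M by apply: Rmult_le_pos; lra.
  have H4 := Rmult_le_compat_l _ _ _ Hpos HQ.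
  have : INR Q * INR M' * (INR M * l / 2) = INR M' * INR M * (INR Q * l) / 2 by field.
  have : INR M * (INR 2 * INR M') = INR M' * INR M * 4 / 2 by simpl; field.
  move=> E1 E2 H.
  match goal with |- (_ <= INR ?Y) => have H' := (H : Rge (INR Y) _) end.
  lra.
have [i Hi] := @pigeon M (2 * M')%N (fun i : 'I_M => \sum_(k < N.+1) mv k i) HM (ltac:(lia) : (0 < 2 * M')%N) Htot.
set x := INR i / INR M.
have Hx : 0 <= x < 1.
  have := pos_INR i. have : INR i < INR M by apply: lt_INR; apply/ltP.
  rewrite /x; split.
  - apply: Rmult_le_pos => //; apply: Rlt_le; apply: Rinv_0_lt_compat; lra.
  - apply (Rmult_lt_reg_l (INR M)); first lra. rewrite (_ : INR M * (INR i / INR M) = INR i); first lra.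
    field; lra.
set K := [set k : 'I_N.+1 | mv k i].
have HKc : #|K| = (\sum_(k < N.+1) mv k i)%N.
  rewrite -sum1_card big_mkcond /=; apply: eq_bigr => k _; rewrite inE; by case: (mv k i).
pose pb := pbool.
have pbP : forall P : Prop, pb P -> P.
  by move=> P; rewrite /pb => /pboolP.
set KF := [set k in K | pb (Fcond x id a (Z.of_nat k))].
set KB := [set k in K | pb (Fcond x Z.opp b (Z.of_nat k))].
have HKU : (#|K| <= #|KF| + #|KB|)%N.
  apply: leq_trans (_ : #|KF :|: KB| <= _)%N; last by rewrite cardsU leq_subr.
  apply: subset_leq_card; apply/subsetP => k Hk'.
  have Hmvk : phi (lamp (Z.of_nat k) gam) 0 x <> x.
    move: Hk'; rewrite inE /mv; case: Req_EM_T => //.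
  have Hmk : mv k i by move: Hk'; rewrite inE.
  rewrite !inE Hmk /=.
  case: (comm_cond a b k x Hx Hmvk) => H; apply/orP; [left|right];
    rewrite /pb; apply/pboolP; exact: H.
have Hupper : forall c S, Sums T (3 * N.+1) (phi (@fS N c S) 0 x - x).
  move=> c S; apply: (upper T HT1 HT2 HT3 N.+1) => //.
  by move=> j Hj; apply: fS_supp.
have Hfin : forall KK : {set 'I_N.+1}, (M' <= #|KK|)%N ->
   (2 ^ #|KK| <= (3 * N.+1).+1 ^ r)%N -> False.
  move=> KK H1 H2.
  have := leq_trans (leq_pexp2l (isT : (0 < 2)%N) H1) H2.
  rewrite HN mulnA. move: HM'; rewrite ltnNge => /negP; by apply.
have H2M : (2 * M' <= #|KF| + #|KB|)%N by rewrite -HKc in Hi; apply: leq_trans HKU.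
case: (leqP M' #|KF|) => HF; last first.
  case: (leqP M' #|KB|) => HBB; last by lia.
  apply: (Hfin KB HBB).
  apply: (@count_sets N KB (3 * N.+1) T x (fun S => phi (fS b S) 0 x)) => //.
  move=> S1 S2; rewrite !powersetE => H1 H2 E.
  apply: (@inj_sets N x Hx b Z.opp (fun k : 'I_N.+1 => (N - k)%N) _ KB _ S1 S2 H1 H2 E).
    move=> k k' Hkk. have := ltn_ord k. have := ltn_ord k'. lia.
  by move=> k; rewrite inE => /andP [_ /pbP].
apply: (Hfin KF HF).
apply: (@count_sets N KF (3 * N.+1) T x (fun S => phi (fS a S) 0 x)) => //.
move=> S1 S2; rewrite !powersetE => H1 H2 E.
apply: (@inj_sets N x Hx a id (fun k : 'I_N.+1 => nat_of_ord k) _ KF _ S1 S2 H1 H2 E).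
  move=> k k' Hkk /=. lia.
by move=> k; rewrite inE => /andP [_ /pbP].
Qed.

End Emb.


Theorem mainTheorem3 (gT : finGroupType) (nonab : ~~ abelian [set: gT]) :
  ~ wreath_Z_embeds_in_IET gT.
Proof.
move=> [phi [Hiet [Hhom Hinjw]]].
have [a [b Hab]] : exists a b : gT, (a * b <> b * a)%g.
  apply: NNPP => Hn; move/negP: nonab; apply.
  apply/centsP => x _ y _. apply: NNPP => Hc. apply: Hn.
  exists x, y => E; apply: Hc; exact: E.
exact: (@main_false gT phi Hiet Hhom Hinjw a b Hab).
Qed.
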